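(* Let $X_n$ be the final altitude of a uniformly random Dyck meander with catastrophes of length $n$. Then $X_n$ admits a geometric limit distribution: $\Pr(X_n=k)\sim(1-\lambda)\lambda^k$, where $\lambda=v_1(\rho_0)^{-1}\approx0.6823278$ is the unique real positive root of $\lambda^3+\lambda-1$, namely $\lambda=\frac16\big(108+12\sqrt{93}\big)^{1/3}-2\big(108+12\sqrt{93}\big)^{-1/3}$.
   Context: Dyck paths with catastrophes: paths starting at altitude $0$, never going below $0$, with steps $+1$, $-1$, and catastrophes (a step from an altitude $h\ge2$ directly to altitude $0$); meanders may end at any altitude; length = number of steps; the final altitude is the altitude of the endpoint. Here $v_1(z)=\frac{1+\sqrt{1-4z^2}}{2z}$ is the large root of $1-z(u^{-1}+u)=0$, and $\rho_0\approx0.46557$ is the unique positive root of $\rho_0^3+2\rho_0^2+\rho_0-1$. *)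

(* Defs.v *)
From Stdlib Require Import Reals List Arith.
From Coquelicot Require Import Coquelicot.
Import ListNotations.
Open Scope R_scope.

Inductive step := Up | Down | Cat.

Fixpoint run (h : nat) (s : list step) : option nat :=
  match s with
  | nil => Some h
  | Up :: t => run (S h) t
  | Down :: t => match h with O => None | S h' => run h' t end
  | Cat :: t => if Nat.leb 2 h then run O t else None
  end.

Fixpoint words (n : nat) : list (list step) :=
  match n with
  | O => [nil]
  | S m => flat_map (fun w => [Up :: w; Down :: w; Cat :: w]) (words m)
  end.

Definition meander_total (n : nat) : nat :=
  length (filter (fun w => match run 0 w with Some _ => true | None => false end)
                 (words n)).

Definition meander_count (n k : nat) : nat :=
  length (filter (fun w => match run 0 w with Some j => Nat.eqb j k | None => false end)
                 (words n)).

Definition prob_final (n k : nat) : R := INR (meander_count n k) / INR (meander_total n).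

Definition v1 (z : R) : R := (1 + sqrt (1 - 4 * z ^ 2)) / (2 * z).

(* Main.v *)
Require Import Defs.
From Stdlib Require Import Reals Lra Lia Nsatz List.
From Coquelicot Require Import Coquelicot.
Import ListNotations.
Open Scope R_scope.

Definition s93 : R := 108 + 12 * sqrt 93.
Definition tt3 : R := Rpower s93 (/ 3).
Definition lamc : R := / 6 * tt3 - 2 * / tt3.

Lemma s93_pos : 0 < s93.
Proof. unfold s93. pose proof (sqrt_pos 93). lra. Qed.

Lemma tt3_pos : 0 < tt3.
Proof. unfold tt3, Rpower. apply exp_pos. Qed.

Lemma tt3_cube : tt3 ^ 3 = s93.
Proof.
  rewrite <- Rpower_pow by apply tt3_pos.
  unfold tt3. rewrite Rpower_mult.
  replace (/ 3 * INR 3) with 1 by (simpl; field).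
  apply Rpower_1, s93_pos.
Qed.

Lemma lamc_eq : lamc ^ 3 + lamc - 1 = 0.
Proof.
  pose proof tt3_pos as Hp. pose proof tt3_cube as Hc.
  assert (Hs : sqrt 93 * sqrt 93 = 93) by (apply sqrt_sqrt; lra).
  unfold lamc. field_simplify_eq; [| lra].
  unfold s93 in Hc.
  replace (tt3 ^ 6) with ((tt3 ^ 3) ^ 2) by ring. rewrite Hc.
  replace ((108 + 12 * sqrt 93) ^ 2) with (108*108 + 2*108*12*sqrt 93 + 144 * (sqrt 93 * sqrt 93)) by ring.
  rewrite Hs. ring.
Qed.

Lemma lamc_pos : 0 < lamc.
Proof.
  pose proof lamc_eq as H.
  destruct (Rle_or_lt lamc 0) as [Hl|Hl]; [|exact Hl].
  exfalso. assert (0 <= lamc * lamc) by nra. nra.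
Qed.

Lemma lamc_lt1 : lamc < 1.
Proof. pose proof lamc_eq. pose proof lamc_pos. nra. Qed.

Lemma lamc_unique : forall x, 0 < x -> x ^ 3 + x - 1 = 0 -> x = lamc.
Proof.
  intros x Hx Hq. pose proof lamc_eq. pose proof lamc_pos.
  assert (E : (x - lamc) * (x*x + x*lamc + lamc*lamc + 1) = 0) by nra.
  apply Rmult_integral in E. destruct E as [E|E]; [lra|]. nra.
Qed.

Lemma v1_part : forall rho0 : R, 0 < rho0 -> rho0 ^ 3 + 2 * rho0 ^ 2 + rho0 - 1 = 0 ->
       lamc = / v1 rho0.
Proof.
  intros r Hr Hq.
  assert (Hr2 : r < 1/2) by nra.
  assert (Hd : 0 <= 1 - 4 * r ^ 2) by nra.
  set (s := sqrt (1 - 4 * r ^ 2)).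
  assert (Hs0 : 0 <= s) by apply sqrt_pos.
  assert (Hs2 : s * s = 1 - 4 * r ^ 2) by (apply sqrt_sqrt; exact Hd).
  set (mu := 2 * r / (1 + s)).
  assert (Hinv : / v1 r = mu).
  { unfold v1, mu. fold s. field. split; lra. }
  rewrite Hinv.
  assert (Hmu0 : 0 < mu) by (unfold mu; apply Rdiv_lt_0_compat; lra).
  assert (Hmu1 : mu < 1).
  { unfold mu. apply (Rmult_lt_reg_r (1 + s)); [lra|]. field_simplify; lra. }
  assert (E : r * (1 + mu ^ 2) = mu).
  { unfold mu. field_simplify_eq; [|lra]. replace (s ^ 2) with (s * s) by ring. rewrite Hs2. ring. }
  clearbody mu s.
  assert (P0 : (1 + mu ^ 2) ^ 3 * (r ^ 3 + 2 * r ^ 2 + r - 1) =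
     (r * (1 + mu ^ 2)) ^ 3 + 2 * (r * (1 + mu ^ 2)) ^ 2 * (1 + mu ^ 2)
     + (r * (1 + mu ^ 2)) * (1 + mu ^ 2) ^ 2 - (1 + mu ^ 2) ^ 3) by ring.
  rewrite Hq, E in P0.
  assert (P : (mu ^ 3 + mu - 1) * (mu ^ 3 - mu ^ 2 - 1) = 0).
  { replace ((mu ^ 3 + mu - 1) * (mu ^ 3 - mu ^ 2 - 1)) with
      (- (mu ^ 3 + 2 * mu ^ 2 * (1 + mu ^ 2) + mu * (1 + mu ^ 2) ^ 2 - (1 + mu ^ 2) ^ 3)) by ring.
    rewrite <- P0. ring. }
  apply Rmult_integral in P. destruct P as [P|P].
  - symmetry. apply lamc_unique; assumption.
  - exfalso. nra.
Qed.

Definition sumL {A : Type} (F : A -> R) (l : list A) : R :=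
  fold_right (fun a acc => F a + acc) 0 l.

Lemma sumL_ext {A : Type} (F G : A -> R) l :
  (forall a, F a = G a) -> sumL F l = sumL G l.
Proof. intros H; induction l; simpl; [reflexivity|]. rewrite H, IHl. reflexivity. Qed.

Lemma INR_length_filter {A : Type} (p : A -> bool) l :
  INR (length (filter p l)) = sumL (fun a => if p a then 1 else 0) l.
Proof.
  induction l as [|a l IH]; simpl; [reflexivity|].
  destruct (p a); simpl length; [rewrite S_INR|]; rewrite IH; ring.
Qed.

Definition B (f : nat -> R) (h : nat) : R :=
  f (S h) + match h with O => 0 | S h' => f h' end + (if Nat.leb 2 h then f O else 0).

Definition val (g : nat -> R) (h : nat) (w : list step) : R :=
  match run h w with Some j => g j | None => 0 end.

Definition Ssum (n h : nat) (g : nat -> R) : R := sumL (val g h) (words n).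

Lemma sumL_flat l h g :
  sumL (val g h) (flat_map (fun w => [Up :: w; Down :: w; Cat :: w]) l) =
  B (fun x => sumL (val g x) l) h.
Proof.
  unfold B.
  induction l as [|w l IH]; simpl.
  - destruct h as [|[|h]]; simpl; ring.
  - rewrite IH. unfold val at 1 2 3. simpl.
    destruct h as [|[|h]]; simpl; unfold val; simpl; ring.
Qed.

Lemma Ssum_S n h g : Ssum (S n) h g = B (fun x => Ssum n x g) h.
Proof. unfold Ssum. simpl words. apply sumL_flat. Qed.

Definition beta : R := / lamc ^ 2.
Definition cc : R := / lamc ^ 5.
Definition alpha : R := lamc ^ 9.
Definition ell (h : nat) : R := match h with O => 1 | S _ => cc * (1 - lamc ^ h) end.
Definition N (f : nat -> R) (h : nat) : R := B f h / beta.
Fixpoint Nn (n : nat) (g : nat -> R) : nat -> R :=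
  match n with O => g | S n => N (Nn n g) end.

Lemma pow_le1 x n : 0 <= x <= 1 -> x ^ n <= 1.
Proof. intros H. rewrite <- (pow1 n). apply pow_incr. exact H. Qed.

Lemma beta_pos : 0 < beta.
Proof. unfold beta. apply Rinv_0_lt_compat. apply pow_lt, lamc_pos. Qed.

Lemma cc_pos : 0 < cc.
Proof. unfold cc. apply Rinv_0_lt_compat. apply pow_lt, lamc_pos. Qed.

Lemma lam3 : lamc ^ 3 = 1 - lamc.
Proof. pose proof lamc_eq. lra. Qed.

Lemma beta_alt : beta = lamc + / lamc.
Proof.
  pose proof lamc_pos. pose proof lam3. unfold beta.
  field_simplify_eq; [|lra]. nra.
Qed.

Lemma ell_ge1 h : 1 <= ell h.
Proof.
  destruct h as [|h]; simpl ell; [lra|].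
  pose proof lamc_pos; pose proof lamc_lt1; pose proof lam3.
  assert (lamc ^ S h <= lamc) .
  { simpl. assert (lamc ^ h <= 1) by (apply pow_le1; lra). nra. }
  assert (Hc : cc * (1 - lamc) = / lamc ^ 2).
  { unfold cc. rewrite <- lam3. field. lra. }
  assert (1 <= / lamc ^ 2).
  { rewrite <- Rinv_1. apply Rinv_le_contravar. apply pow_lt; lra.
    assert (lamc^2 <= lamc) by nra. lra. }
  pose proof cc_pos.
  assert (cc * lamc ^ S h <= cc * lamc) by (apply Rmult_le_compat_l; lra).
  simpl in H5. lra.
Qed.

Lemma ell_le_cc h : ell h <= cc.
Proof.
  pose proof lamc_pos; pose proof lamc_lt1.
  destruct h as [|h]; simpl ell.
  - unfold cc. rewrite <- Rinv_1. apply Rinv_le_contravar. apply pow_lt; lra.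
    assert (lamc ^ 5 <= 1) by (apply pow_le1; lra). lra.
  - pose proof cc_pos. assert (0 < lamc ^ S h) by (apply pow_lt; lra). simpl in *. nra.
Qed.

Lemma ell_eigen h : B ell h = beta * ell h.
Proof.
  pose proof lamc_pos as Hp. pose proof lam3 as H3.
  unfold B, ell, beta, cc.
  destruct h as [|[|h]]; simpl Nat.leb; cbv iota.
  - field_simplify_eq; [|lra]. nra.
  - field_simplify_eq; [|lra]. nra.
  - simpl pow. set (t := lamc ^ h). field_simplify_eq; [|lra].
    assert (H7 : lamc ^ 7 = 1 - 2 * lamc ^ 2).
    { replace (lamc ^ 7) with (lamc * (lamc^3)^2) by ring. rewrite H3.
      replace (lamc * (1 - lamc) ^ 2) with (lamc - 2 * lamc ^ 2 + lamc ^ 3) by ring.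
      rewrite H3. ring. }
    assert (E : lamc ^ 5 * t + lamc ^ 3 * t = lamc ^ 2 * t).
    { replace (lamc ^ 5 * t + lamc ^ 3 * t) with (lamc ^ 2 * t * (lamc ^ 3 + lamc)) by ring.
      rewrite H3. ring. }
    lra.
Qed.

Lemma beta_neq : beta <> 0.
Proof. pose proof beta_pos. lra. Qed.

Lemma N_ext f g : (forall x, f x = g x) -> forall h, N f h = N g h.
Proof. intros H h. unfold N, B. destruct h as [|[|h]]; simpl; rewrite !H; reflexivity. Qed.

Lemma N_lin a b f g h : N (fun x => a * f x + b * g x) h = a * N f h + b * N g h.
Proof. pose proof beta_neq. unfold N, B. destruct h as [|[|h]]; simpl; field; auto. Qed.

Lemma N_mono f g : (forall x, f x <= g x) -> forall h, N f h <= N g h.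
Proof.
  intros H h. pose proof beta_pos. unfold N, Rdiv. apply Rmult_le_compat_r.
  - left. apply Rinv_0_lt_compat. lra.
  - unfold B. pose proof (H (S h)). pose proof (H 0%nat). destruct h as [|h']; simpl; [lra|].
    pose proof (H h'). destruct h' as [|h']; simpl; lra.
Qed.

Lemma N_ell h : N ell h = ell h.
Proof. pose proof beta_neq. unfold N. rewrite ell_eigen. field. auto. Qed.

Lemma B_ge_S e h : (forall x, 0 <= e x) -> e (S h) <= B e h.
Proof.
  intros H. unfold B. pose proof (H (S h)). pose proof (H 0%nat). destruct h as [|h']; simpl; [lra|].
    pose proof (H h'). destruct h' as [|h']; simpl; lra.
Qed.

Lemma B_ge_0 e h : (forall x, 0 <= e x) -> (1 <= h)%nat -> e O <= B e h.
Proof.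
  intros H Hh. unfold B. pose proof (H (S h)). pose proof (H 0%nat).
  destruct h as [|[|h]]; [lia| |]; simpl; [lra|]. pose proof (H (S h)). lra.
Qed.

Lemma Nn_ext n : forall f g, (forall x, f x = g x) -> forall h, Nn n f h = Nn n g h.
Proof.
  induction n as [|n IH]; intros f g H h; simpl; [apply H|].
  apply N_ext. intro x. apply IH. exact H.
Qed.

Lemma Nn_lin n : forall a b f g h,
  Nn n (fun x => a * f x + b * g x) h = a * Nn n f h + b * Nn n g h.
Proof.
  induction n as [|n IH]; intros a b f g h; simpl; [reflexivity|].
  rewrite <- N_lin. apply N_ext. intro x. apply IH.
Qed.

Lemma Nn_mono n : forall f g, (forall x, f x <= g x) -> forall h, Nn n f h <= Nn n g h.
Proof.
  induction n as [|n IH]; intros f g H h; simpl; [apply H|].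
  apply N_mono. intro x. apply IH. exact H.
Qed.

Lemma Nn_shift n : forall g h, Nn (S n) g h = Nn n (N g) h.
Proof.
  induction n as [|n IH]; intros g h; [reflexivity|].
  change (Nn (S (S n)) g h) with (N (Nn (S n) g) h).
  change (Nn (S n) (N g) h) with (N (Nn n (N g)) h).
  apply N_ext. intro x. apply IH.
Qed.

Lemma Ssum_Nn n : forall h g, Ssum n h g = beta ^ n * Nn n g h.
Proof.
  induction n as [|n IH]; intros h g.
  - unfold Ssum. simpl. unfold val. simpl. ring.
  - rewrite Ssum_S. simpl Nn.
    assert (E : B (fun x => Ssum n x g) h = B (fun x => beta ^ n * Nn n g x + 0 * Nn n g x) h).
    { unfold B. destruct h as [|[|h]]; simpl; rewrite !IH; ring. }
    rewrite E. pose proof beta_neq.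
    assert (E2 : B (fun x => beta ^ n * Nn n g x + 0 * Nn n g x) h
                 = beta * N (fun x => beta ^ n * Nn n g x + 0 * Nn n g x) h).
    { unfold N. field. auto. }
    rewrite E2, N_lin. simpl. ring.
Qed.

Lemma N_bounds f m M : (forall x, m * ell x <= f x <= M * ell x) ->
  forall h, m * ell h <= N f h <= M * ell h.
Proof.
  intros H h. split.
  - replace (m * ell h) with (N (fun x => m * ell x + 0 * ell x) h).
    + apply N_mono. intro x. specialize (H x). lra.
    + rewrite N_lin, N_ell. ring.
  - replace (M * ell h) with (N (fun x => M * ell x + 0 * ell x) h).
    + apply N_mono. intro x. specialize (H x). lra.
    + rewrite N_lin, N_ell. ring.
Qed.

Lemma Nn_bounds n : forall g m M, (forall x, m * ell x <= g x <= M * ell x) ->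
  forall h, m * ell h <= Nn n g h <= M * ell h.
Proof.
  induction n as [|n IH]; intros g m M H h; simpl; [apply H|].
  apply N_bounds. apply IH. exact H.
Qed.

Lemma N_sub f m h : N (fun x => f x - m * ell x) h = N f h - m * ell h.
Proof.
  rewrite (N_ext _ (fun x => 1 * f x + (- m) * ell x)) by (intro; ring).
  rewrite N_lin, N_ell. ring.
Qed.

Lemma N_neg f h : N (fun x => - f x) h = - N f h.
Proof.
  rewrite (N_ext _ (fun x => (-1) * f x + 0 * f x)) by (intro; ring).
  rewrite N_lin. ring.
Qed.

Lemma inv_beta2 : / beta ^ 2 = lamc ^ 4.
Proof. pose proof lamc_pos. unfold beta. field. lra. Qed.

Lemma two_step_lower f m : (forall x, m * ell x <= f x) ->
  forall h, m * ell h + (f O - m) * lamc ^ 4 <= N (N f) h.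
Proof.
  intros H h. pose proof beta_pos as Hb.
  set (e := fun x => f x - m * ell x).
  assert (He : forall x, 0 <= e x) by (intro x; unfold e; specialize (H x); lra).
  set (e' := fun x => N f x - m * ell x).
  assert (Ee' : forall x, e' x = N e x) by (intro x; unfold e', e; rewrite N_sub; reflexivity).
  assert (He' : forall x, 0 <= e' x).
  { intro x. rewrite Ee'. unfold N, Rdiv. apply Rmult_le_pos.
    - unfold B. pose proof (He (S x)). pose proof (He 0%nat).
      destruct x as [|x]; simpl; [lra|]. pose proof (He x). destruct x; simpl; lra.
    - left. apply Rinv_0_lt_compat. lra. }
  assert (He'1 : forall x, (f O - m) / beta <= e' (S x)).
  { intro x. rewrite Ee'. unfold N. apply Rmult_le_compat_r.
    - left. apply Rinv_0_lt_compat. lra.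
    - replace (f O - m) with (e O) by (unfold e; simpl; ring).
      apply B_ge_0; [exact He | lia]. }
  assert (Ef : N (N f) h - m * ell h = N e' h) by (unfold e'; rewrite N_sub; reflexivity).
  assert (Hs : e' (S h) / beta <= N e' h).
  { unfold N. apply Rmult_le_compat_r; [left; apply Rinv_0_lt_compat; lra|].
    apply B_ge_S. exact He'. }
  assert (Hx : (f O - m) * lamc ^ 4 = (f O - m) / beta / beta).
  { rewrite <- inv_beta2. field. lra. }
  assert (Hy : (f O - m) / beta / beta <= e' (S h) / beta).
  { apply Rmult_le_compat_r; [left; apply Rinv_0_lt_compat; lra|]. apply He'1. }
  lra.
Qed.

Lemma two_step_upper f M : (forall x, f x <= M * ell x) ->
  forall h, N (N f) h <= M * ell h - (M - f O) * lamc ^ 4.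
Proof.
  intros H h.
  pose proof (two_step_lower (fun x => - f x) (- M)) as L.
  assert (H' : forall x, - M * ell x <= - f x) by (intro x; specialize (H x); lra).
  specialize (L H' h).
  rewrite (N_ext (N (fun x => - f x)) (fun x => - N f x)) in L by (intro; apply N_neg).
  rewrite N_neg in L. lra.
Qed.

Lemma alpha_ell h : alpha * ell h <= lamc ^ 4.
Proof.
  pose proof lamc_pos. pose proof (ell_le_cc h).
  assert (E : alpha * cc = lamc ^ 4) by (unfold alpha, cc; field; lra).
  assert (0 < alpha) by (unfold alpha; apply pow_lt; lra).
  assert (alpha * ell h <= alpha * cc) by (apply Rmult_le_compat_l; lra).
  lra.
Qed.

Lemma two_step f m M : (forall x, m * ell x <= f x <= M * ell x) ->
  forall h, (m + alpha * (f O - m)) * ell h <= N (N f) h <= (M - alpha * (M - f O)) * ell h.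
Proof.
  intros H h.
  assert (H0 := H O). simpl ell in H0.
  pose proof (alpha_ell h) as Ha.
  assert (P1 : 0 <= (lamc ^ 4 - alpha * ell h) * (f O - m)) by (apply Rmult_le_pos; lra).
  assert (P2 : 0 <= (lamc ^ 4 - alpha * ell h) * (M - f O)) by (apply Rmult_le_pos; lra).
  pose proof (two_step_lower f m (fun x => proj1 (H x)) h).
  pose proof (two_step_upper f M (fun x => proj2 (H x)) h).
  split; nra.
Qed.

Lemma alpha_bounds : 0 < alpha < 1.
Proof.
  pose proof lamc_pos. pose proof lamc_lt1. unfold alpha. split.
  - apply pow_lt. lra.
  - apply pow_lt_1_compat; [lra|lia].
Qed.

Lemma doeblin_iter j : forall g m M, (forall x, m * ell x <= g x <= M * ell x) ->
  exists m' M', m <= m' /\ M' - m' <= (1 - alpha) ^ j * (M - m) /\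
    forall n h, (2 * j <= n)%nat -> m' * ell h <= Nn n g h <= M' * ell h.
Proof.
  induction j as [|j IH]; intros g m M H.
  - exists m, M. split; [lra|]. split; [simpl; lra|].
    intros n h _. apply Nn_bounds. exact H.
  - assert (H0 := H O). simpl ell in H0.
    pose proof alpha_bounds.
    destruct (IH (fun x => N (N g) x) (m + alpha * (g O - m)) (M - alpha * (M - g O)))
      as [m' [M' [Hm [HM Hn]]]].
    { intro x. apply two_step. exact H. }
    exists m', M'. split; [nra|]. split.
    + replace ((1 - alpha) ^ S j * (M - m)) with
        ((1 - alpha) ^ j * ((M - alpha * (M - g O)) - (m + alpha * (g O - m)))) by (simpl; ring).
      exact HM.
    + intros n h Hn2. destruct n as [|[|n]]; [lia|lia|].
      rewrite Nn_shift, Nn_shift.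
      rewrite (Nn_ext n (N (N g)) (fun x => N (N g) x)) by reflexivity.
      apply Hn. lia.
Qed.

Lemma conv g m M : (forall x, m * ell x <= g x <= M * ell x) ->
  exists L : R, m <= L /\ is_lim_seq (fun n => Nn n g O) L.
Proof.
  intros H.
  assert (H0 := H O). simpl ell in H0.
  pose proof alpha_bounds as Ha.
  assert (Hc : ex_lim_seq_cauchy (fun n => Nn n g O)).
  { intro eps. pose proof (cond_pos eps) as He.
    destruct (pow_lt_1_zero (1 - alpha) ltac:(rewrite Rabs_right; lra)
               (eps / (M - m + 1)) ltac:(apply Rdiv_lt_0_compat; lra)) as [J HJ].
    specialize (HJ J (Nat.le_refl J)).
    rewrite Rabs_right in HJ by (apply Rle_ge, pow_le; lra).
    destruct (doeblin_iter J g m M H) as [m' [M' [Hm [HM Hn]]]].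
    exists (2 * J)%nat. intros n n' Hn1 Hn2.
    pose proof (Hn n O Hn1) as A1. pose proof (Hn n' O Hn2) as A2. simpl ell in A1, A2.
    assert (HMm : (1 - alpha) ^ J * (M - m) <= eps / (M - m + 1) * (M - m)).
    { apply Rmult_le_compat_r; lra. }
    assert (eps / (M - m + 1) * (M - m) < eps).
    { apply (Rmult_lt_reg_r (M - m + 1)); [lra|]. field_simplify; nra. }
    apply Rabs_def1; lra. }
  apply ex_lim_seq_cauchy_corr in Hc. destruct Hc as [L HL].
  exists L. split; [|exact HL].
  assert (Hle : Rbar_le m L).
  { apply (is_lim_seq_le (fun _ => m) (fun n => Nn n g O)); [|apply is_lim_seq_const|exact HL].
    intro n. pose proof (Nn_bounds n g m M H O) as B0. simpl ell in B0. lra. }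
  exact Hle.
Qed.

Definition delta (k j : nat) : R := if Nat.eqb j k then 1 else 0.
Definition one (j : nat) : R := 1.

Lemma count_eq n k : INR (meander_count n k) = beta ^ n * Nn n (delta k) O.
Proof.
  rewrite <- Ssum_Nn. unfold meander_count. rewrite INR_length_filter.
  unfold Ssum. apply sumL_ext. intro w. unfold val, delta. destruct (run 0 w); reflexivity.
Qed.

Lemma total_eq n : INR (meander_total n) = beta ^ n * Nn n one O.
Proof.
  rewrite <- Ssum_Nn. unfold meander_total. rewrite INR_length_filter.
  unfold Ssum. apply sumL_ext. intro w. unfold val, one. destruct (run 0 w); reflexivity.
Qed.

Lemma rec_S k n : Nn (S n) (delta (S k)) O =
  (Nn n (delta k) O + Nn n (delta (S (S k))) O) / beta.
Proof.
  pose proof beta_neq.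
  rewrite Nn_shift.
  rewrite (Nn_ext n (N (delta (S k))) (fun x => (/ beta) * delta k x + (/ beta) * delta (S (S k)) x)).
  - rewrite Nn_lin. field. auto.
  - intro x. unfold N, B, delta. destruct x as [|[|x]]; simpl; field; auto.
Qed.

Lemma rec_0 n : Nn (S n) (delta O) O = (Nn n one O - Nn n (delta O) O) / beta.
Proof.
  pose proof beta_neq.
  rewrite Nn_shift.
  rewrite (Nn_ext n (N (delta O)) (fun x => (/ beta) * one x + (- / beta) * delta O x)).
  - rewrite Nn_lin. field. auto.
  - intro x. unfold N, B, delta, one. destruct x as [|[|x]]; simpl; field; auto.
Qed.

Lemma delta_bounds k : forall x, 0 * ell x <= delta k x <= 1 * ell x.
Proof.
  intro x. pose proof (ell_ge1 x). unfold delta. destruct (Nat.eqb x k); lra.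
Qed.

Lemma one_bounds : forall x, / cc * ell x <= one x <= 1 * ell x.
Proof.
  intro x. pose proof (ell_ge1 x). pose proof (ell_le_cc x). pose proof cc_pos. unfold one.
  split; [|lra].
  apply (Rmult_le_reg_l cc); [lra|]. field_simplify; lra.
Qed.

Definition cseq (k : nat) : R := real (Lim_seq (fun n => Nn n (delta k) O)).
Definition Cval : R := real (Lim_seq (fun n => Nn n one O)).

Lemma lim_real u (L : R) : is_lim_seq u L -> real (Lim_seq u) = L.
Proof. intro H. rewrite (is_lim_seq_unique u L H). reflexivity. Qed.

Lemma cseq_lim k : is_lim_seq (fun n => Nn n (delta k) O) (cseq k).
Proof.
  destruct (conv (delta k) 0 1 (delta_bounds k)) as [L [_ HL]].
  unfold cseq. rewrite (lim_real _ L HL). exact HL.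
Qed.

Lemma Cval_lim : is_lim_seq (fun n => Nn n one O) Cval /\ / cc <= Cval.
Proof.
  destruct (conv one (/ cc) 1 one_bounds) as [L [HLm HL]].
  unfold Cval. rewrite (lim_real _ L HL). split; assumption.
Qed.

Lemma lim_uniq u (a b : R) : is_lim_seq u a -> is_lim_seq u b -> a = b.
Proof.
  intros Ha Hb. apply is_lim_seq_unique in Ha. apply is_lim_seq_unique in Hb.
  rewrite Ha in Hb. injection Hb. auto.
Qed.

Lemma cseq_rec k : cseq (S k) = (cseq k + cseq (S (S k))) / beta.
Proof.
  apply (lim_uniq (fun n => Nn (S n) (delta (S k)) O)).
  - apply (is_lim_seq_incr_1 (fun n => Nn n (delta (S k)) O)). apply cseq_lim.
  - apply (is_lim_seq_ext (fun n => / beta * (Nn n (delta k) O + Nn n (delta (S (S k))) O))).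
    + intro n. rewrite rec_S. unfold Rdiv. ring.
    + replace ((cseq k + cseq (S (S k))) / beta) with (/ beta * (cseq k + cseq (S (S k)))) by (unfold Rdiv; ring).
      apply (is_lim_seq_scal_l _ (/ beta) (cseq k + cseq (S (S k)))).
      apply is_lim_seq_plus'; apply cseq_lim.
Qed.

Lemma cseq_0 : cseq O = (Cval - cseq O) / beta.
Proof.
  apply (lim_uniq (fun n => Nn (S n) (delta O) O)).
  - apply (is_lim_seq_incr_1 (fun n => Nn n (delta O) O)). apply cseq_lim.
  - apply (is_lim_seq_ext (fun n => / beta * (Nn n one O + (-1) * Nn n (delta O) O))).
    + intro n. rewrite rec_0. unfold Rdiv. ring.
    + replace ((Cval - cseq O) / beta) with (/ beta * (Cval + (-1) * cseq O)) by (unfold Rdiv; ring).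
      apply (is_lim_seq_scal_l _ (/ beta) (Cval + (-1) * cseq O)).
      apply is_lim_seq_plus'; [apply Cval_lim|].
      apply (is_lim_seq_scal_l _ (-1) (cseq O)). apply cseq_lim.
Qed.

Lemma cseq_bounds k : 0 <= cseq k <= Cval.
Proof.
  split.
  - assert (H : Rbar_le 0 (cseq k)).
    { apply (is_lim_seq_le (fun _ => 0) (fun n => Nn n (delta k) O)); [|apply is_lim_seq_const|apply cseq_lim].
      intro n. pose proof (Nn_bounds n (delta k) 0 1 (delta_bounds k) O). lra. }
    exact H.
  - assert (H : Rbar_le (cseq k) Cval).
    { apply (is_lim_seq_le (fun n => Nn n (delta k) O) (fun n => Nn n one O)); [|apply cseq_lim|apply Cval_lim].
      intro n. apply Nn_mono. intro x. unfold delta, one. destruct (Nat.eqb x k); lra. }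
    exact H.
Qed.

Lemma cseq_geom : forall k, cseq k = cseq O * lamc ^ k.
Proof.
  pose proof lamc_pos as Hl. pose proof lamc_lt1 as Hl1. pose proof beta_alt as Hb.
  pose proof beta_pos as Hbp.
  set (d := fun k => cseq (S k) - lamc * cseq k).
  assert (Hd : forall k, d (S k) = d k * / lamc).
  { intro k. unfold d. pose proof (cseq_rec k) as R.
    assert (R' : cseq (S (S k)) = beta * cseq (S k) - cseq k).
    { assert (R2 : cseq (S k) * beta = cseq k + cseq (S (S k))) by (rewrite R; field; lra).
      lra. }
    rewrite R', Hb. field. lra. }
  assert (Hdk : forall k, d k = d O * (/ lamc) ^ k).
  { induction k as [|k IH]; [simpl; ring|]. rewrite Hd, IH. simpl. ring. }
  assert (HC := cseq_bounds O).
  assert (Hx : Rabs (/ lamc) > 1).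
  { rewrite Rabs_right by (left; apply Rinv_0_lt_compat; lra).
    rewrite <- Rinv_1. apply Rinv_lt_contravar; lra. }
  assert (Hd0 : d O = 0).
  { destruct (Rtotal_order (d O) 0) as [Hn|[He|Hp]]; [exfalso| exact He | exfalso].
    - destruct (Pow_x_infinity _ Hx ((Cval + 1) / (- d O))) as [K HK].
      specialize (HK K (Nat.le_refl K)).
      rewrite Rabs_right in HK by (apply Rle_ge, pow_le; left; apply Rinv_0_lt_compat; lra).
      pose proof (Hdk K) as E.
      assert (Ed : d K = cseq (S K) - lamc * cseq K) by reflexivity.
      pose proof (cseq_bounds K). pose proof (cseq_bounds (S K)).
      assert (T : (Cval + 1) <= (- d O) * (/ lamc) ^ K).
      { apply (Rmult_le_reg_r (/ (- d O))). apply Rinv_0_lt_compat; lra.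
        replace ((- d O) * (/ lamc) ^ K * / (- d O)) with ((/ lamc) ^ K) by (field; lra).
        apply Rge_le; exact HK. }
      assert (lamc * cseq K <= Cval) by nra.
      nra.
    - destruct (Pow_x_infinity _ Hx ((Cval + 1) / d O)) as [K HK].
      specialize (HK K (Nat.le_refl K)).
      rewrite Rabs_right in HK by (apply Rle_ge, pow_le; left; apply Rinv_0_lt_compat; lra).
      pose proof (Hdk K) as E.
      assert (Ed : d K = cseq (S K) - lamc * cseq K) by reflexivity.
      pose proof (cseq_bounds K). pose proof (cseq_bounds (S K)).
      assert (T : (Cval + 1) <= d O * (/ lamc) ^ K).
      { apply (Rmult_le_reg_r (/ d O)). apply Rinv_0_lt_compat; lra.
        replace (d O * (/ lamc) ^ K * / d O) with ((/ lamc) ^ K) by (field; lra).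
        apply Rge_le; exact HK. }
      assert (0 <= lamc * cseq K) by nra.
      nra. }
  intro k. induction k as [|k IH]; [simpl; ring|].
  pose proof (Hdk k) as E. rewrite Hd0 in E. unfold d in E.
  simpl. rewrite <- (Rmult_assoc (cseq O)), (Rmult_comm (cseq O) lamc), Rmult_assoc, <- IH. lra.
Qed.

Lemma cseq_0_val : cseq O = Cval * (1 - lamc).
Proof.
  pose proof cseq_0 as H. pose proof lamc_pos. pose proof lam3. pose proof beta_pos.
  assert (E : cseq O * (beta + 1) = Cval).
  { assert (R2 : cseq O * beta = Cval - cseq O) by (rewrite H at 1; field; lra).
    lra. }
  assert (Hb1 : (1 - lamc) * (beta + 1) = 1).
  { unfold beta. field_simplify_eq; [|lra]. nra. }
  rewrite <- E. replace (cseq O) with (cseq O * ((1 - lamc) * (beta + 1))) at 1 by (rewrite Hb1; ring).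
  ring.
Qed.

Theorem corollary4p17 :
  exists lam : R,
    0 < lam /\ lam ^ 3 + lam - 1 = 0 /\
    (forall x : R, 0 < x -> x ^ 3 + x - 1 = 0 -> x = lam) /\
    (forall rho0 : R, 0 < rho0 -> rho0 ^ 3 + 2 * rho0 ^ 2 + rho0 - 1 = 0 ->
       lam = / v1 rho0) /\
    lam = / 6 * Rpower (108 + 12 * sqrt 93) (/ 3)
          - 2 * / Rpower (108 + 12 * sqrt 93) (/ 3) /\
    (forall k : nat,
       is_lim_seq (fun n : nat => prob_final n k / ((1 - lam) * lam ^ k)) 1).
Proof.
  exists lamc.
  split; [exact lamc_pos|].
  split; [exact lamc_eq|].
  split; [exact lamc_unique|].
  split; [exact v1_part|].
  split; [reflexivity|].
  intro k.
  pose proof lamc_pos as Hl. pose proof lamc_lt1 as Hl1.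
  pose proof beta_pos as Hb. pose proof cc_pos as Hcc.
  destruct Cval_lim as [HC HCm].
  assert (HCp : 0 < Cval) by (pose proof (Rinv_0_lt_compat cc Hcc); lra).
  assert (HK : 0 < (1 - lamc) * lamc ^ k) by (apply Rmult_lt_0_compat; [lra | apply pow_lt; lra]).
  apply (is_lim_seq_ext (fun n => / ((1 - lamc) * lamc ^ k) * (Nn n (delta k) O / Nn n one O))).
  - intro n. unfold prob_final. rewrite count_eq, total_eq.
    pose proof (Nn_bounds n one (/ cc) 1 one_bounds O) as B0. simpl ell in B0.
    pose proof (Rinv_0_lt_compat cc Hcc).
    assert (0 < beta ^ n) by (apply pow_lt; lra).
    assert (0 < lamc ^ k) by (apply pow_lt; lra).
    field; repeat match goal with |- _ /\ _ => split end; lra.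
  - replace (Finite 1) with (Rbar_mult (/ ((1 - lamc) * lamc ^ k)) (cseq k / Cval)).
    + apply is_lim_seq_scal_l. apply is_lim_seq_div'; [apply cseq_lim | exact HC | lra].
    + simpl. f_equal. rewrite cseq_geom, cseq_0_val. assert (0 < lamc ^ k) by (apply pow_lt; lra).
      field; repeat match goal with |- _ /\ _ => split end; lra.
Qed.
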